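(* Let $X$ be a finite alphabet, $L\subseteq X^*$ a regular language and $L^{\mathrm{rev}}$ its reversal. (a) The algebra $(Q,\delta_a,i)$ underlying the minimal deterministic automaton of $L$ (forgetting final states) is isomorphic to the dual $F$-algebra of the smallest subcoalgebra of $\mathsf{Reg}(X)$ containing $L^{\mathrm{rev}}$ (i.e. the smallest boolean subalgebra of $\mathsf{Reg}(X)$ containing $L^{\mathrm{rev}}$ and closed under all left derivatives $a^{-1}(-)$, with the restricted structure). (b) The $F$-algebra associated to the syntactic monoid $e_L:X^*\twoheadrightarrow\mathrm{Syn}(L)$ (states $\mathrm{Syn}(L)$, initial state the unit, transitions $m\mapsto m\cdot e_L(a)$) is isomorphic to the dual $F$-algebra of the smallest local variety of languages containing $L^{\mathrm{rev}}$.
   Context: $F$ is the endofunctor $FQ=1+X\times Q$ on $\mathbf{Set}$; an $F$-algebra is a triple $(Q,(\delta_a)_{a\in X},i)$ with maps $\delta_a:Q\to Q$ and an initial state $i\in Q$. $\overline{T}$ is the endofunctor $\overline{T}B=\{0,1\}\times B^X$ on boolean algebras; a $\overline{T}$-coalgebra is $(B,(\gamma_a)_{a\in X},f)$ with boolean homomorphisms $\gamma_a:B\to B$ and $f:B\to\{0,1\}$. The dual $F$-algebra of a finite $\overline{T}$-coalgebra $(B,\gamma_a,f)$ has as states the atoms of $B$, initial state the unique atom $z$ with $f(z)=1$, and a transition $z\xrightarrow{a}z'$ iff $z'$ is the unique atom with $\gamma_a(z')\geq z$ (this is a restriction of Stone duality, giving a dual equivalence between finite $\overline{T}$-coalgebras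 and finite $F$-algebras). $\mathsf{Reg}(X)$ is the boolean algebra of regular languages over $X$ made into a $\overline{T}$-coalgebra by $f(K)=1$ iff $\varepsilon\in K$ and $\gamma_a(K)=a^{-1}K=\{w: aw\in K\}$. A subcoalgebra of $\mathsf{Reg}(X)$ is a boolean subalgebra closed under all $a^{-1}(-)$. A local variety of languages is a subcoalgebra closed moreover under right derivatives $Ka^{-1}=\{w: wa\in K\}$. $L^{\mathrm{rev}}=\{a_n\cdots a_1: a_1\cdots a_n\in L\}$. The syntactic monoid of $L$ is $X^*/\!\sim$ with $u\sim v$ iff for all $x,y\in X^*$: $xuy\in L\Leftrightarrow xvy\in L$, and $e_L$ is the quotient map. *)

(* Defs.v *)
From Stdlib Require Import FunctionalExtensionality.
From Stdlib Require List.
From mathcomp Require Import all_boot.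
Set Implicit Arguments. Unset Strict Implicit. Unset Printing Implicit Defensive.

Section Lang.
Variable X : finType.

Definition lang := seq X -> bool.

Definition regular (K : lang) : Prop :=
  exists (Q : finType) (d : Q -> X -> Q) (q0 : Q) (F : pred Q),
    forall w, K w = F (foldl d q0 w).

Definition lang_rev (K : lang) : lang := fun w => K (rev w).

Definition lderiv (a : X) (K : lang) : lang := fun w => K (a :: w).
Definition rderiv (a : X) (K : lang) : lang := fun w => K (rcons w a).
Definition lquot (u : seq X) (K : lang) : lang := fun w => K (u ++ w).

Definition lang_empty : lang := fun _ => false.
Definition lang_compl (K : lang) : lang := fun w => ~~ K w.
Definition lang_union (K K' : lang) : lang := fun w => K w || K' w.
Definition lang_sub (K K' : lang) : Prop := forall w, K w -> K' w.

Definition bool_subalg (S : lang -> Prop) : Prop :=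
  [/\ forall K, S K -> regular K,
      S lang_empty,
      forall K, S K -> S (lang_compl K) &
      forall K K', S K -> S K' -> S (lang_union K K')].

Definition subcoalg (S : lang -> Prop) : Prop :=
  bool_subalg S /\ forall a K, S K -> S (lderiv a K).

Definition local_variety (S : lang -> Prop) : Prop :=
  subcoalg S /\ forall a K, S K -> S (rderiv a K).

Definition gen_subcoalg (K : lang) : lang -> Prop :=
  fun K' => forall S, subcoalg S -> S K -> S K'.
Definition gen_local_variety (K : lang) : lang -> Prop :=
  fun K' => forall S, local_variety S -> S K -> S K'.

Definition finite_family (B : lang -> Prop) : Prop :=
  exists s : list lang, forall K, B K -> List.In K s.

Definition atom (B : lang -> Prop) (z : lang) : Prop :=
  [/\ B z, z <> lang_empty &
      forall z', B z' -> lang_sub z' z -> z' = lang_empty \/ z' = z].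

(* Dual F-algebra of the finite coalgebra B: states are atoms;
   initial state = the unique atom z with f(z) = 1, i.e. [::] \in z;
   z -a-> z' iff z' is the unique atom with a^{-1} z' >= z. *)
Definition dual_init (B : lang -> Prop) (z : lang) : Prop :=
  [/\ atom B z, z [::] & forall z', atom B z' -> z' [::] -> z' = z].

Definition dual_trans (B : lang -> Prop) (a : X) (z z' : lang) : Prop :=
  [/\ atom B z', lang_sub z (lderiv a z') &
      forall z'', atom B z'' -> lang_sub z (lderiv a z'') -> z'' = z'].

Definition atoms (B : lang -> Prop) := {z : lang | atom B z}.

Definition min_state (L : lang) := {K : lang | exists u, K = lquot u L}.
Definition min_init (L : lang) : min_state L :=
  exist _ L (ex_intro _ [::] erefl).
Lemma min_delta_proof (L : lang) (a : X) (q : min_state L) :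
  exists u, lderiv a (sval q) = lquot u L.
Proof.
case: q => K [u Ku] /=; exists (rcons u a); rewrite Ku.
by apply: functional_extensionality => w; rewrite /lderiv /lquot cat_rcons.
Qed.
Definition min_delta (L : lang) (a : X) (q : min_state L) : min_state L :=
  exist _ (lderiv a (sval q)) (min_delta_proof a q).

(* Syntactic congruence and syntactic monoid Syn(L) = X^*/~ ;
   an element is represented by its ~-class (as a predicate on words). *)
Definition syneq (L : lang) (u v : seq X) : Prop :=
  forall x y, L (x ++ u ++ y) = L (x ++ v ++ y).
Definition syn_state (L : lang) :=
  {C : seq X -> Prop | exists u, C = syneq L u}.
Definition e_syn (L : lang) (u : seq X) : syn_state L :=
  exist _ (syneq L u) (ex_intro _ u erefl).
End Lang.

(* Main.v *)
Require Import Defs.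
From mathcomp Require Import all_boot.
From Stdlib Require Import ClassicalEpsilon ProofIrrelevance FunctionalExtensionality PropExtensionality.
From Stdlib Require List.
Set Implicit Arguments. Unset Strict Implicit. Unset Printing Implicit Defensive.

Definition pb (P : Prop) : bool := if excluded_middle_informative P then true else false.
Lemma pbP (P : Prop) : reflect P (pb P).
Proof. by rewrite /pb; case: excluded_middle_informative => h; constructor. Qed.

Lemma sig_eq (A : Type) (P : A -> Prop) (x y : {a | P a}) : sval x = sval y -> x = y.
Proof. case: x => a pa; case: y => b pb' /= e; subst b; f_equal; apply: proof_irrelevance. Qed.

Lemma inj_surj_bij (A B : Type) (f : A -> B) :
  injective f -> (forall b, exists a, f a = b) -> bijective f.
Proof.
move=> inj sur.
exists (fun b => proj1_sig (constructive_indefinite_description _ (sur b))).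
- move=> a; apply: inj; exact: proj2_sig (constructive_indefinite_description _ (sur (f a))).
- move=> b; exact: proj2_sig (constructive_indefinite_description _ (sur b)).
Qed.

Lemma In_mem (T : eqType) (x : T) (s : seq T) : x \in s -> List.In x s.
Proof.
elim: s => //= y s IH; rewrite inE => /orP [/eqP ->|/IH h]; [left|right] => //.
Qed.

Definition genP (X : finType) (P : (lang X -> Prop) -> Prop) (K0 : lang X) : lang X -> Prop :=
  fun K' => forall S, P S -> S K0 -> S K'.

Lemma lang_ext (X : finType) (K M : lang X) : (forall w, K w = M w) -> K = M.
Proof. exact: functional_extensionality. Qed.

Lemma bs_inter (X : finType) (S : lang X -> Prop) K M :
  bool_subalg S -> S K -> S M -> S (fun w => K w && M w).
Proof.
rewrite /bool_subalg; case=> _ _ hc hu hK hM.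
have -> : (fun w => K w && M w) = lang_compl (lang_union (lang_compl K) (lang_compl M)).
  by apply: lang_ext => w; rewrite /lang_compl /lang_union negb_or !negbK.
exact: hc _ (hu _ _ (hc _ hK) (hc _ hM)).
Qed.

Lemma bs_comb (X : finType) (S : lang X -> Prop) (J : Type) (M : J -> lang X)
  (gs : seq J) (f : seq bool -> bool) :
  bool_subalg S -> (forall j, S (M j)) -> S (fun y => f (map (fun j => M j y) gs)).
Proof.
move=> hS hM; elim: gs f => [|j gs IH] f /=.
  case: (f [::]).
  - have -> : (fun _ : seq X => true) = lang_compl (@lang_empty X) by apply: lang_ext.
    by case: hS => [_ h0 hc _]; apply: hc.
  - have -> : (fun _ : seq X => false) = @lang_empty X by apply: lang_ext.
    by case: hS.
have -> : (fun y => f (M j y :: map (fun j => M j y) gs)) =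
   lang_union (fun y => M j y && f (true :: map (fun j => M j y) gs))
              (fun y => lang_compl (M j) y && f (false :: map (fun j => M j y) gs)).
  by apply: lang_ext => y; rewrite /lang_union /lang_compl; case: (M j y); rewrite /= ?orbF.
case: (hS) => _ _ hc hu; apply: hu; apply: bs_inter => //.
- exact: (IH (fun bs => f (true :: bs))).
- by apply: hc.
- exact: (IH (fun bs => f (false :: bs))).
Qed.

Lemma nonempty (X : finType) (z : lang X) : z <> @lang_empty X -> exists y, z y.
Proof.
move=> nz; case: (classic (exists y, z y)) => // h; exfalso; apply: nz.
apply: lang_ext => w; case e: (z w) => //; exfalso; apply: h; by exists w.
Qed.

Section Gen.
Variable X : finType.
Variable P : (lang X -> Prop) -> Prop.
Variable K0 : lang X.
Hypothesis HPb : forall S, P S -> bool_subalg S.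
Variable E : seq X -> seq X -> Prop.
Hypothesis Erefl : forall x, E x x.
Hypothesis Esym : forall x y, E x y -> E y x.
Hypothesis Etrans : forall x y z, E x y -> E y z -> E x z.
Hypothesis Econs : forall a x y, E x y -> E (a :: x) (a :: y).
Local Notation gen := (genP P K0).
Definition cls (x : seq X) : lang X := fun y => pb (E x y).
Hypothesis Hcls : forall x, gen (cls x).
Variable B1 : lang X -> Prop.
Hypothesis PB1 : P B1.
Hypothesis B1K0 : B1 K0.
Hypothesis B1fin : finite_family B1.
Hypothesis B1inv : forall K, B1 K -> forall x y, E x y -> K x = K y.
Variable St : Type.
Variable st : seq X -> St.
Hypothesis st_surj : forall s, exists u, st u = s.
Hypothesis st_eq : forall x y, st x = st y <-> E (rev x) (rev y).

Lemma gen_inter K M : gen K -> gen M -> gen (fun w => K w && M w).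
Proof. by move=> hK hM S hP hS; apply: bs_inter; [exact: HPb | exact: hK | exact: hM]. Qed.

Lemma gen_B1 K : gen K -> B1 K.
Proof. by move=> h; apply: h. Qed.

Lemma gen_ff : finite_family gen.
Proof. case: B1fin => s hs; exists s => K hK; apply: hs; exact: gen_B1. Qed.

Lemma cls_self x : cls x x.
Proof. by apply/pbP. Qed.

Lemma atom_cls x : atom gen (cls x).
Proof.
split; first exact: Hcls.
- move=> h; have := cls_self x; by rewrite h.
- move=> z' gz' sub; case: (classic (exists y, z' y)) => [[y zy]|nz].
    right; apply: lang_ext => w.
    have Exy : E x y by apply/pbP; exact: sub _ zy.
    apply/idP/idP => [/sub //| /pbP Exw].
    by rewrite (B1inv (gen_B1 gz') (Etrans (Esym Exw) Exy)).
  left; apply: lang_ext => w; case zw: (z' w) => //; exfalso; apply: nz; by exists w.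
Qed.

Lemma atom_inter z z' y : atom gen z -> atom gen z' -> z y -> z' y -> z = z'.
Proof.
case=> gz _ hz; case=> gz' _ hz' zy z'y.
pose m := fun w => z w && z' w.
have gm : gen m := gen_inter gz gz'.
have mne : m <> @lang_empty X.
  move=> e; have my : m y by rewrite /m zy z'y.
  by move: my; rewrite e.
have e1 : m = z.
  by case: (hz m gm (fun w h => proj1 (andP h))) => // /mne.
have e2 : m = z'.
  by case: (hz' m gm (fun w h => proj2 (andP h))) => // /mne.
by rewrite -e1 e2.
Qed.

Lemma atom_is_cls z : atom gen z -> exists x, z = cls x.
Proof.
move=> az; case: (az) => gz nz _; have [y zy] := nonempty nz.
exists y; exact: (atom_inter az (atom_cls y) zy (cls_self y)).
Qed.

Lemma cls_eq x y : cls x = cls y -> E x y.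
Proof. by move=> e; have := cls_self y; rewrite -e => /pbP. Qed.

Lemma cls_eq' x y : E x y -> cls x = cls y.
Proof.
move=> h; apply: lang_ext => w; apply/pbP/pbP => h'.
- exact: Etrans (Esym h) h'.
- exact: Etrans h h'.
Qed.

Definition rep (s : St) : seq X :=
  proj1_sig (constructive_indefinite_description _ (st_surj s)).
Lemma rep_spec s : st (rep s) = s.
Proof. exact: proj2_sig (constructive_indefinite_description _ (st_surj s)). Qed.

Definition phi (s : St) : atoms gen := exist _ (cls (rev (rep s))) (atom_cls _).

Lemma phi_st u : sval (phi (st u)) = cls (rev u).
Proof. apply: cls_eq'; apply/st_eq; exact: rep_spec. Qed.

Theorem gen_main : finite_family gen /\
  exists phi : St -> atoms gen,
    [/\ bijective phi, dual_init gen (sval (phi (st [::]))) &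
        forall a u, dual_trans gen a (sval (phi (st u))) (sval (phi (st (rcons u a))))].
Proof.
split; first exact: gen_ff.
exists phi; split.
- apply: inj_surj_bij.
  + move=> s1 s2 e; have e' := f_equal sval e; simpl in e'.
    have h : st (rep s1) = st (rep s2) by apply/st_eq; exact: cls_eq e'.
    by rewrite -(rep_spec s1) h rep_spec.
  + move=> [z az]; have [x ex] := atom_is_cls az.
    exists (st (rev x)); apply: sig_eq; rewrite phi_st revK; exact: (esym ex).
- rewrite phi_st; split; [exact: atom_cls | exact: cls_self |].
  move=> z' az' z'0; exact: (atom_inter az' (atom_cls [::]) z'0 (cls_self _)).
- move=> a u; rewrite !phi_st rev_rcons; split.
  + exact: atom_cls.
  + move=> w /pbP h; rewrite /lderiv; apply/pbP; exact: Econs.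
  + move=> z'' az'' sub; have h := sub _ (cls_self (rev u)).
    exact: (atom_inter az'' (atom_cls _) h (cls_self _)).
Qed.
End Gen.

Section DFA.
Variables (X : finType) (Q : finType) (d : Q -> X -> Q).

Definition tr (y : seq X) : {ffun Q -> Q} := [ffun q => foldl d q (rev y)].
Lemma tr_cons a y : tr (a :: y) = [ffun q => d (tr y q) a].
Proof. by apply/ffunP => q; rewrite !ffunE rev_cons foldl_rcons. Qed.
Lemma tr_rcons a y : tr (rcons y a) = [ffun q => tr y (d q a)].
Proof. by apply/ffunP => q; rewrite !ffunE rev_rcons. Qed.

Definition B0 (K : lang X) : Prop :=
  exists G : {ffun {ffun Q -> Q} -> bool}, K = fun y => G (tr y).

Lemma B0_reg K : B0 K -> regular K.
Proof.
case=> G ->; exists {ffun Q -> Q}, (fun (g : {ffun Q -> Q}) a => [ffun q => g (d q a)] : {ffun Q -> Q}), [ffun q => q],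
  (fun g => G g) => w; congr (G _).
elim/last_ind: w => [|w a IH].
  by apply/ffunP => q; rewrite !ffunE.
by rewrite foldl_rcons -IH tr_rcons.
Qed.

Lemma B0_ff : finite_family B0.
Proof.
exists (map (fun G : {ffun {ffun Q -> Q} -> bool} => fun y => G (tr y)) (enum {ffun {ffun Q -> Q} -> bool})).
move=> K [G ->]; apply: List.in_map; apply: In_mem; by rewrite mem_enum.
Qed.

Lemma B0_empty : B0 (@lang_empty X).
Proof. by exists [ffun _ => false]; apply: lang_ext => y; rewrite ffunE. Qed.
Lemma B0_compl K : B0 K -> B0 (lang_compl K).
Proof. by case=> G ->; exists [ffun g : {ffun Q -> Q} => ~~ G g]; apply: lang_ext => y; rewrite ffunE. Qed.
Lemma B0_union K M : B0 K -> B0 M -> B0 (lang_union K M).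
Proof.
by case=> G ->; case=> H ->; exists [ffun g : {ffun Q -> Q} => G g || H g]; apply: lang_ext => y; rewrite ffunE.
Qed.
Lemma B0_lderiv a K : B0 K -> B0 (lderiv a K).
Proof.
by case=> G ->; exists [ffun g : {ffun Q -> Q} => G [ffun q => d (g q) a]]; apply: lang_ext => y;
  rewrite ffunE /lderiv tr_cons.
Qed.
Lemma B0_rderiv a K : B0 K -> B0 (rderiv a K).
Proof.
by case=> G ->; exists [ffun g : {ffun Q -> Q} => G [ffun q => g (d q a)]]; apply: lang_ext => y;
  rewrite ffunE /rderiv tr_rcons.
Qed.

Definition Einv (E : seq X -> seq X -> Prop) (K : lang X) := forall x y, E x y -> K x = K y.

Lemma B1_subcoalg E : (forall a x y, E x y -> E (a :: x) (a :: y)) ->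
  subcoalg (fun K => B0 K /\ Einv E K).
Proof.
move=> Ec; split; first split.
- by move=> K [h _]; exact: B0_reg.
- by split; [exact: B0_empty | move=> x y].
- move=> K [h1 h2]; split; first exact: B0_compl.
  by move=> x y e; rewrite /lang_compl (h2 _ _ e).
- move=> K M [h1 h2] [h3 h4]; split; first exact: B0_union.
  by move=> x y e; rewrite /lang_union (h2 _ _ e) (h4 _ _ e).
- move=> a K [h1 h2]; split; first exact: B0_lderiv.
  by move=> x y e; rewrite /lderiv (h2 _ _ (Ec _ _ _ e)).
Qed.

Lemma B1_lv E : (forall a x y, E x y -> E (a :: x) (a :: y)) ->
  (forall a x y, E x y -> E (rcons x a) (rcons y a)) ->
  local_variety (fun K => B0 K /\ Einv E K).
Proof.
move=> Ec Es; split; first exact: B1_subcoalg.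
move=> a K [h1 h2]; split; first exact: B0_rderiv.
by move=> x y e; rewrite /rderiv (h2 _ _ (Es _ _ _ e)).
Qed.

Lemma cls_from_tests (P : (lang X -> Prop) -> Prop) (K0 : lang X)
  (HPb : forall S, P S -> bool_subalg S) (E : seq X -> seq X -> Prop)
  (I : Type) (H : I -> {ffun {ffun Q -> Q} -> bool}) :
  (forall i, genP P K0 (fun y => H i (tr y))) ->
  (forall x y, E x y <-> forall i, H i (tr x) = H i (tr y)) ->
  forall x, genP P K0 (cls E x).
Proof.
move=> hg hE x S hP hS.
pose M := fun G : {ffun {ffun Q -> Q} -> bool} =>
  if pb (exists i, H i = G) then (fun y => G (tr y)) else @lang_empty X.
have hM : forall G, S (M G).
  move=> G; rewrite /M; case: pbP => [[i <-]|_]; [exact: hg | by case: (HPb _ hP)].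
pose f := fun bs : seq bool => bs == map (fun G => M G x) (enum {ffun {ffun Q -> Q} -> bool}).
have e : (fun y => f (map (fun G => M G y) (enum {ffun {ffun Q -> Q} -> bool}))) = cls E x.
  apply: lang_ext => y; rewrite /f /cls; apply/eqP/pbP => h.
  - apply/hE => i.
    move: (proj2 (eq_in_map _ _ _) h (H i) (mem_enum _ _)).
    rewrite /M; case: pbP => [_ ->|[]] //; by exists i.
  - apply/eq_in_map => G _; rewrite /M; case: pbP => // [[i <-]].
    by rewrite (proj1 (hE x y) h i).
rewrite -e; exact: bs_comb (HPb _ hP) hM.
Qed.

Lemma sc_lquot (S : lang X -> Prop) u K : subcoalg S -> S K -> S (lquot u K).
Proof.
elim: u K => [|a u IH] K hS hK; first exact: hK.
exact: (IH (lderiv a K) hS (hS.2 a K hK)).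
Qed.

Lemma lv_rquot (S : lang X -> Prop) w K : local_variety S -> S K -> S (fun y => K (y ++ w)).
Proof.
elim/last_ind: w K => [|w a IH] K hS hK.
  have -> : (fun y => K (y ++ [::])) = K by apply: lang_ext => y; rewrite cats0.
  exact: hK.
have -> : (fun y => K (y ++ rcons w a)) = (fun y => rderiv a K (y ++ w)).
  by apply: lang_ext => y; rewrite /rderiv rcons_cat.
exact: (IH _ hS (hS.2 a K hK)).
Qed.

Lemma lv_lrquot (S : lang X -> Prop) u w K : local_variety S -> S K ->
  S (fun y => K (u ++ y ++ w)).
Proof.
move=> hS hK.
have -> : (fun y => K (u ++ y ++ w)) = lquot u (fun y => K (y ++ w)).
  by apply: lang_ext => y; rewrite /lquot catA.
exact: (sc_lquot u hS.1 (lv_rquot w hS hK)).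
Qed.
End DFA.

Theorem mainTheorem13 (X : finType) (L : lang X) (HL : regular L) :
  (* (a) minimal automaton ~ dual of smallest subcoalgebra containing L^rev *)
  (finite_family (gen_subcoalg (lang_rev L)) /\
   exists phi : min_state L -> atoms (gen_subcoalg (lang_rev L)),
     [/\ bijective phi,
         dual_init (gen_subcoalg (lang_rev L)) (sval (phi (min_init L))) &
         forall (a : X) (q : min_state L),
           dual_trans (gen_subcoalg (lang_rev L)) a
             (sval (phi q)) (sval (phi (min_delta a q)))])
  /\
  (* (b) F-algebra of Syn(L): init e_L(eps), m |-> m . e_L(a), i.e.
     e_L(u) |-> e_L(u a) *)
  (finite_family (gen_local_variety (lang_rev L)) /\
   exists psi : syn_state L -> atoms (gen_local_variety (lang_rev L)),
     [/\ bijective psi,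
         dual_init (gen_local_variety (lang_rev L)) (sval (psi (e_syn L [::]))) &
         forall (a : X) (u : seq X),
           dual_trans (gen_local_variety (lang_rev L)) a
             (sval (psi (e_syn L u))) (sval (psi (e_syn L (rcons u a))))]).
Proof.
case: HL => Q [d [q0 [F HLw]]].
have B0rev : B0 d (lang_rev L).
  exists [ffun g : {ffun Q -> Q} => F (g q0)]; apply: lang_ext => y.
  by rewrite ffunE /lang_rev HLw ffunE.
split.
-
  pose E := fun x y : seq X => lquot (rev x) L = lquot (rev y) L.
  have Econs : forall a x y, E x y -> E (a :: x) (a :: y).
    move=> a x y e; apply: lang_ext => w; rewrite /lquot !rev_cons !cat_rcons.
    exact: (congr1 (fun f => f (a :: w)) e).
  pose H := fun v : seq X => [ffun g : {ffun Q -> Q} => F (foldl d (g q0) v)].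
  have Ha : forall v y, H v (tr d y) = L (rev y ++ v).
    by move=> v y; rewrite ffunE HLw foldl_cat ffunE.
  have HPb : forall S, @subcoalg X S -> bool_subalg S by move=> S [].
  have Hcls : forall x, genP (@subcoalg X) (lang_rev L) (cls E x).
    apply: (cls_from_tests (d := d) HPb (H := H)).
    + move=> v.
      have -> : (fun y => H v (tr d y)) = lquot (rev v) (lang_rev L).
        by apply: lang_ext => y; rewrite Ha /lquot /lang_rev rev_cat revK.
      move=> S hS hK; exact: sc_lquot.
    + move=> x y; split => [e v | h]; first by rewrite !Ha; exact: (congr1 (fun f => f v) e).
      by apply: lang_ext => v; have := h v; rewrite !Ha.
  pose st := fun u : seq X => exist (fun K => exists u, K = lquot u L) (lquot u L) (ex_intro _ u erefl) : min_state L.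
  have st_surj : forall s, exists u, st u = s.
    by case=> K [u e]; exists u; apply: sig_eq; rewrite /= e.
  have st_eq : forall x y, st x = st y <-> E (rev x) (rev y).
    move=> x y; rewrite /E !revK; split => [e | e]; [exact: (congr1 sval e) | exact: sig_eq].
  have := @gen_main X (@subcoalg X) (lang_rev L) HPb E (fun x => erefl)
    (fun x y e => esym e) (fun x y z e1 e2 => etrans e1 e2) Econs Hcls
    (fun K => B0 d K /\ Einv E K) (@B1_subcoalg X Q d E Econs) _ _ _ _ st st_surj st_eq.
  case.
  + split => // x y e; have := congr1 (fun f => f [::]) e.
    by rewrite /= /lquot !cats0.
  + case: (B0_ff d) => s hs; exists s => K [hK _]; exact: hs.
  + by move=> K [].
  + move=> ff [phi [bij hi htr]]; split => //; exists phi; split => //.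
    * move=> a q; have [u <-] := st_surj q.
      have -> : min_delta a (st u) = st (rcons u a).
        by apply: sig_eq; apply: lang_ext => w; rewrite /= /lderiv /lquot cat_rcons.
      exact: htr.
-
  pose E := fun x y : seq X => syneq L (rev x) (rev y).
  have Econs : forall a x y, E x y -> E (a :: x) (a :: y).
    move=> a x y e p v; rewrite /E !rev_cons !cat_rcons; exact: e.
  have Esnoc : forall a x y, E x y -> E (rcons x a) (rcons y a).
    move=> a x y e p v; rewrite !rev_rcons; have := e (rcons p a) v; by rewrite !cat_rcons.
  pose H := fun pv : seq X * seq X =>
    [ffun g : {ffun Q -> Q} => F (foldl d (g (foldl d q0 pv.1)) pv.2)].
  have Hb : forall pv y, H pv (tr d y) = L (pv.1 ++ rev y ++ pv.2).
    by move=> [p v] y; rewrite ffunE HLw !foldl_cat ffunE.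
  have HPb : forall S, @local_variety X S -> bool_subalg S by move=> S [[]].
  have Hcls : forall x, genP (@local_variety X) (lang_rev L) (cls E x).
    apply: (cls_from_tests (d := d) HPb (H := H)).
    + move=> [p v].
      have -> : (fun y => H (p, v) (tr d y)) = (fun y => lang_rev L (rev v ++ y ++ rev p)).
        by apply: lang_ext => y; rewrite Hb /lang_rev !rev_cat !revK catA.
      move=> S hS hK; exact: lv_lrquot.
    + move=> x y; split => [e [p v] | h p v]; first by rewrite !Hb; exact: e.
      by have := h (p, v); rewrite !Hb.
  have st_surj : forall s, exists u, e_syn L u = s.
    by case=> C [u e]; exists u; apply: sig_eq; rewrite /= e.
  have st_eq : forall x y, e_syn L x = e_syn L y <-> E (rev x) (rev y).
    move=> x y; rewrite /E !revK; split => [e | h].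
    * have e' := congr1 sval e; simpl in e'.
      have := congr1 (fun C => C y) e'; move=> /= ->; by move=> p v.
    * apply: sig_eq => /=; apply: functional_extensionality => w.
      apply: propositional_extensionality; split => h' p v.
      - by rewrite -(h p v) (h' p v).
      - by rewrite (h p v) (h' p v).
  have := @gen_main X (@local_variety X) (lang_rev L) HPb E (fun x p v => erefl)
    (fun x y e p v => esym (e p v)) (fun x y z e1 e2 p v => etrans (e1 p v) (e2 p v)) Econs Hcls
    (fun K => B0 d K /\ Einv E K) (@B1_lv X Q d E Econs Esnoc) _ _ _ _ (e_syn L) st_surj st_eq.
  case.
  + split => // x y e; have := e [::] [::].
    by rewrite /= !cats0.
  + case: (B0_ff d) => s hs; exists s => K [hK _]; exact: hs.
  + by move=> K [].
  + by [].
Qed.
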